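(* Fix positive integers $m,n$ and $\alpha\in[0,1]$. Among all approval elections with $m$ candidates, $n$ voters, and saturation $\alpha$, an election $E$ has the largest value of $\mathrm{chd}(E)$ if and only if (a) all candidates are approved in some vote in $\mathrm{cen}(E)$, or (b) all candidates are disapproved in some vote in $\mathrm{cen}(E)$, or (c) for each candidate $c_j$, $|A(c_j)|\in\{\lfloor n/2\rfloor,\lceil n/2\rceil\}$.
   Context: An (approval) election is $E=(C,V)$ with $C=\{c_1,\dots,c_m\}$ and voters $V=(v_1,\dots,v_n)$, each vote a binary vector in $\{0,1\}^m$; $A(c)$ is the set of voters approving $c$, $A(v)$ the set of candidates approved by $v$. Saturation is $\mathrm{satr}(E)=\frac{1}{nm}\sum_{v\in V}|A(v)|$. $\mathrm{ham}(u,v)=\sum_j|u[j]-v[j]|$. A vote $u$ is central for $E$ if for each candidate $c_j$, $u[j]=v_i[j]$ for at least half of the voters $v_i$; $\mathrm{cen}(E)$ is the set of central votes. The central Hamming distance is $\mathrm{chd}(E)=\sum_{v_i\in V}\mathrm{ham}(v_i,u)$ for any $u\in\mathrm{cen}(E)$ (independent of the choice of $u$). *)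

(* Defs.v *)
From mathcomp Require Import all_boot all_order all_algebra.
Set Implicit Arguments. Unset Strict Implicit. Unset Printing Implicit Defensive.
Import Order.TTheory GRing.Theory Num.Theory.

(* An approval election with m candidates and n voters: voter i's vote is a
   binary vector over the candidates 'I_m; (E i j) = true iff voter i approves c_j. *)
Definition vote (m : nat) := {ffun 'I_m -> bool}.
Definition election (m n : nat) := {ffun 'I_n -> vote m}.

Definition napp (m : nat) (v : vote m) : nat := #|[set j | v j]|.

Definition supp (m n : nat) (E : election m n) (j : 'I_m) : nat :=
  #|[set i | E i j]|.

Definition satr (m n : nat) (E : election m n) : rat :=
  ((\sum_(i < n) napp (E i))%:R / (n * m)%:R)%R.

Definition ham (m : nat) (u v : vote m) : nat := #|[set j | u j != v j]|.

Definition central (m n : nat) (E : election m n) (u : vote m) : bool :=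
  [forall j : 'I_m, n <= 2 * #|[set i | E i j == u j]|].

Definition cen (m n : nat) (E : election m n) : {set vote m} :=
  [set u | central E u].

(* chd(E) = sum_i ham(v_i, u) for a (any) central vote u; cen E is never empty,
   so the default branch is never used. *)
Definition chd (m n : nat) (E : election m n) : nat :=
  match [pick u in cen E] with
  | Some u => \sum_(i < n) ham (E i) u
  | None => 0
  end.

(* Main.v *)
Require Import Defs.
From mathcomp Require Import all_boot all_order all_algebra zify.
Import Order.TTheory GRing.Theory Num.Theory.
Set Implicit Arguments. Unset Strict Implicit.

Lemma card_setE (T : finType) (P : pred T) : #|[set x | P x]| = \sum_(x : T) (P x : nat).
Proof. rewrite -sum1_card big_mkcond /=; apply: eq_bigr => x _; rewrite inE; by case: (P x). Qed.

Section S.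
Variables m n : nat.

Lemma supp_le (E : election m n) j : supp E j <= n.
Proof. by rewrite /supp; apply: (leq_trans (max_card _)); rewrite card_ord. Qed.

Lemma cnt_true (E : election m n) j : #|[set i | E i j == true]| = supp E j.
Proof. by rewrite /supp !card_setE; apply: eq_bigr => i _; rewrite eqb_id. Qed.

Lemma cnt_false (E : election m n) j : #|[set i | E i j == false]| = n - supp E j.
Proof.
rewrite /supp !card_setE.
have : \sum_i ((E i j == false) : nat) + \sum_i (E i j : nat) = n.
  by rewrite -big_split /= -[in RHS](card_ord n) -sum1_card; apply: eq_bigr => i _; case: (E i j).
lia.
Qed.

Lemma cnt_neq (E : election m n) j b : #|[set i | E i j != b]| = #|[set i | E i j == ~~ b]|.
Proof. by apply: eq_card => i; rewrite !inE; case: b; case: (E i j). Qed.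

Lemma chdE (E : election m n) : chd E = \sum_j minn (supp E j) (n - supp E j).
Proof.
rewrite /chd; case: pickP => [u|Hn].
- rewrite inE => /forallP Hu.
  transitivity (\sum_i \sum_j ((E i j != u j) : nat)).
    by apply: eq_bigr => i _; rewrite /ham card_setE.
  rewrite exchange_big /=; apply: eq_bigr => j _.
  rewrite -card_setE cnt_neq.
  have := Hu j; have := supp_le E j.
  case: (u j) => /=; rewrite ?cnt_true ?cnt_false. 1,2: move=> ? ?; set s := supp E j; lia.
- exfalso; have := Hn [ffun j => n <= 2 * supp E j].
  rewrite inE; move/negbT/negP; apply; apply/forallP => j; rewrite ffunE.
  have := supp_le E j.
  case: (leqP n (2 * supp E j)) => H; rewrite ?cnt_true ?cnt_false; move: H; set s := supp E j; lia.
Qed.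

Lemma tot (E : election m n) : \sum_i napp (E i) = \sum_j supp E j.
Proof.
rewrite /napp /supp; under eq_bigr do rewrite card_setE.
by rewrite exchange_big; apply: eq_bigr => j _; rewrite card_setE.
Qed.

Definition build (s : 'I_m -> nat) : election m n := [ffun i : 'I_n => [ffun j : 'I_m => (i < s j)]].

Lemma sum_lt k N : \sum_(i < N) ((i < k) : nat) = minn k N.
Proof.
elim: N => [|N IH]; first by rewrite big_ord0; lia.
rewrite big_ord_recr /= IH; case: ltnP => /=; lia.
Qed.

Lemma supp_build s j : supp (build s) j = minn (s j) n.
Proof.
rewrite /supp card_setE -(sum_lt (s j) n); apply: eq_bigr => i _; by rewrite !ffunE.
Qed.

Lemma two_point (F G : 'I_m -> nat) a b : a != b ->
  (forall x, x != a -> x != b -> F x = G x) ->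
  \sum_x F x + G a + G b = \sum_x G x + F a + F b.
Proof.
move=> ab H.
rewrite (bigD1 a) //= (bigD1 b) /= 1?eq_sym //.
rewrite [\sum_x G x](bigD1 a) //= [\sum_(i < m | i != a) G i](bigD1 b) /= 1?eq_sym //.
rewrite (eq_bigr G); last by move=> x /andP [] ? ?; apply: H.
move: (\sum_(i < m | (i != a) && (i != b)) G i) => X; lia.
Qed.
End S.

Unset Implicit Arguments.
Theorem lemma2 (m n : nat) (hm : (0 < m)%N) (hn : (0 < n)%N) (alpha : rat)
  (ha0 : (0 <= alpha)%R) (ha1 : (alpha <= 1)%R)
  (E : election m n) (hE : satr E = alpha) :
  (forall E' : election m n, satr E' = alpha -> (chd E' <= chd E)%N) <->
  ((exists2 u, u \in cen E & forall j : 'I_m, u j = true) \/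
   (exists2 u, u \in cen E & forall j : 'I_m, u j = false) \/
   (forall j : 'I_m, supp E j = n./2 \/ supp E j = uphalf n)).
Proof.
have totE : forall E' : election m n, satr E' = alpha <-> \sum_j supp E' j = \sum_j supp E j.
  move=> E'; rewrite -hE /satr !tot; split => [H|->//].
  have hnm : ((n * m)%:R != 0 :> rat)%R by rewrite pnatr_eq0 muln_eq0 negb_or -!lt0n hn hm.
  apply/eqP; rewrite -(eqr_nat rat); apply/eqP.
  by move: (congr1 (fun x => (x * (n * m)%:R)%R) H) => /=; rewrite !divfK.
have hsumC : forall E' : election m n, \sum_j (n - supp E' j) + \sum_j supp E' j = m * n.
  move=> E'; rewrite -big_split /= (eq_bigr (fun => n)) => [|j _]; last by rewrite subnK // supp_le.
  by rewrite sum_nat_const card_ord.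
have Hh := odd_double_half n; rewrite -addnn in Hh.
have Ho : (odd n : nat) <= 1 by case: odd.
rewrite uphalf_half.
move: Hh Ho; set h := n./2; set o := (odd n : nat) => Hh Ho.
split.
- move=> Hmax.
  have Hmove : forall a b, a != b -> 0 < supp E a -> supp E b < n ->
     minn (supp E a - 1) (n - (supp E a - 1)) + minn (supp E b + 1) (n - (supp E b + 1))
     <= minn (supp E a) (n - supp E a) + minn (supp E b) (n - supp E b).
    move=> a b ab Ha Hb.
    pose s' := fun x => if x == a then supp E a - 1 else if x == b then supp E b + 1 else supp E x.
    have Hs' : forall x, supp (build n s') x = s' x.
      move=> x; rewrite supp_build /s'; have := supp_le E x; have := supp_le E a.
      case: (x == a); case: (x == b); move: Ha Hb; set sa := supp E a; set sb := supp E b; set sx := supp E x; lia.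
    have Hout : forall x, x != a -> x != b -> supp (build n s') x = supp E x.
      by move=> x xa xb; rewrite Hs' /s' (negbTE xa) (negbTE xb).
    have HT := two_point ab Hout.
    have Hsa : supp (build n s') a = supp E a - 1 by rewrite Hs' /s' eqxx.
    have Hsb : supp (build n s') b = supp E b + 1 by rewrite Hs' /s' eq_sym (negbTE ab) eqxx.
    have HF := two_point (F := fun x => minn (supp (build n s') x) (n - supp (build n s') x))
                         (G := fun x => minn (supp E x) (n - supp E x)) ab
                         (fun x xa xb => congr1 (fun y => minn y (n - y)) (Hout x xa xb)).
    have := Hmax (build n s'); rewrite !chdE => H.
    have HTs : \sum_j supp (build n s') j = \sum_j supp E j.
      move: HT; rewrite Hsa Hsb.
      move: Ha; set sa := supp E a; set sb := supp E b.
      move: (\sum_j supp (build n s') j) (\sum_j supp E j) => X Y; lia.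
    have {}H := H ((totE _).2 HTs).
    move: HF H; rewrite /= Hsa Hsb.
    move: (\sum_x minn (supp (build n s') x) (n - supp (build n s') x)) => X.
    move: (\sum_x minn (supp E x) (n - supp E x)) => Y.
    move: Ha; set sa := supp E a; set sb := supp E b; lia.
  case: (boolP [forall j, n <= 2 * supp E j]) => [/forallP Ha | /forallPn [k Hk]].
    left; exists [ffun => true]; last by move=> j; rewrite ffunE.
    by rewrite inE; apply/forallP => j; rewrite ffunE cnt_true; exact: Ha.
  case: (boolP [forall j, 2 * supp E j <= n]) => [/forallP Hb | /forallPn [j Hj]].
    right; left; exists [ffun => false]; last by move=> j; rewrite ffunE.
    rewrite inE; apply/forallP => j; rewrite ffunE cnt_false.
    have := Hb j; have := supp_le E j; set x := supp E j; lia.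
  right; right => l.
  rewrite -ltnNge in Hk; rewrite -ltnNge in Hj.
  have Hl := supp_le E l; have Hjn := supp_le E j; have Hkn := supp_le E k.
  case: (ltnP (supp E l) h) => H1.
    exfalso.
    have jl : j != l by apply/eqP => e; move: Hj H1; rewrite e; set x := supp E l; lia.
    have := Hmove j l jl.
    move: Hj H1 Hl Hjn; set sj := supp E j; set sl := supp E l; lia.
  case: (ltnP (o + h) (supp E l)) => H2.
    exfalso.
    have lk : l != k by apply/eqP => e; move: Hk H2; rewrite e; set x := supp E k; lia.
    have := Hmove l k lk.
    move: Hk H2 Hl Hkn; set sk := supp E k; set sl := supp E l; lia.
  move: H1 H2; set x := supp E l; lia.
- move=> Hc E' HE'; have HT := (totE E').1 HE'; rewrite !chdE.
  case: Hc => [[u Hu Hu1]|[[u Hu Hu0]|Hc]].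
  + have Ha : forall j, n <= 2 * supp E j.
      by move: Hu; rewrite inE => /forallP Hu j; have := Hu j; rewrite Hu1 cnt_true.
    rewrite [X in _ <= X](eq_bigr (fun j => n - supp E j)) => [|j _]; last first.
      by have := Ha j; have := supp_le E j; set x := supp E j; lia.
    apply: (@leq_trans (\sum_j (n - supp E' j))); first by apply: leq_sum => j _; exact: geq_minr.
    have := hsumC E; have := hsumC E'; move: HT.
    move: (\sum_j supp E' j) (\sum_j supp E j) (\sum_j (n - supp E' j)) (\sum_j (n - supp E j)).
    move=> A B C D; lia.
  + have Hb : forall j, n <= 2 * (n - supp E j).
      by move: Hu; rewrite inE => /forallP Hu j; have := Hu j; rewrite Hu0 cnt_false.
    rewrite [X in _ <= X](eq_bigr (fun j => supp E j)) => [|j _]; last first.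
      by have := Hb j; have := supp_le E j; set x := supp E j; lia.
    apply: (@leq_trans (\sum_j supp E' j)); first by apply: leq_sum => j _; exact: geq_minl.
    by rewrite HT.
  + rewrite [X in _ <= X](eq_bigr (fun j => h)) => [|j _]; last first.
      by have := Hc j; have := supp_le E j; set x := supp E j; lia.
    apply: leq_sum => j _; set x := supp E' j; lia.
Qed.
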